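(* Let $m$ be an odd prime, $\gamma_1,\gamma_2\in\mathbb Z$ and $n\in\mathbb Z^+$. Let $\underline a=(a_0,a_1,\dots)$ be an almost $m$-ary nearly perfect sequence of type $(\gamma_1,\gamma_2)$ and period $n+2$ with exactly two zero-symbols in each period, and suppose these are consecutive, i.e. $a_j=a_{j+1}=0$ for some $j$ (indices modulo $n+2$). Then $\underline a$ is symmetric: $a_x=a_{2j+1-x}$ for all $x$ (indices modulo $n+2$).
   Context: Let $\zeta_m\in\mathbb C$ be a primitive $m$-th root of unity. A sequence $\underline a=(a_0,a_1,\dots)$ of period $N$ is an almost $m$-ary sequence with $s$ zero-symbols if in each period exactly $s$ entries are $0$ and every other entry is of the form $\zeta_m^{b}$ for some integer $b$. Its autocorrelation function is $C_{\underline a}(t)=\sum_{i=0}^{N-1}a_i\overline{a_{i+t}}$ (indices modulo $N$, bar = complex conjugation). $\underline a$ is a nearly perfect sequence (NPS) of type $(\gamma_1,\gamma_2)$ if every out-of-phase autocorrelation coefficient $C_{\underline a}(t)$, $1\le t\le N-1$, equals $\gamma_1$ or $\gamma_2$. *)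

(* Defs.v *)
From HB Require Import structures.
From mathcomp Require Import all_boot all_order all_algebra all_field.
Set Implicit Arguments. Unset Strict Implicit. Unset Printing Implicit Defensive.
Import Order.TTheory GRing.Theory Num.Theory.
Local Open Scope ring_scope.

(* Sequences are a : nat -> algC (algC = algebraic complex numbers, a model of C
   containing all roots of unity), assumed N-periodic. *)
Definition periodic (N : nat) (a : nat -> algC) : Prop := forall i, a (i + N)%N = a i.

Definition autocorr (N : nat) (a : nat -> algC) (t : nat) : algC :=
  \sum_(i < N) a i * (a (i + t)%N)^*.

Definition almost_mary (m : nat) (zeta : algC) (N s : nat) (a : nat -> algC) : Prop :=
  #|[set i : 'I_N | a i == 0]| = s /\
  forall i : 'I_N, a i != 0 -> exists b : nat, a i = zeta ^+ b.

Definition nearly_perfect (N : nat) (a : nat -> algC) (g1 g2 : int) : Prop :=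
  forall t : nat, (1 <= t <= N.-1)%N -> autocorr N a t = g1%:~R \/ autocorr N a t = g2%:~R.

(* Main.v *)
Require Import Defs.
From HB Require Import structures.
From mathcomp Require Import all_boot all_order all_algebra all_field.
From mathcomp Require Import zify.
Import Order.TTheory GRing.Theory Num.Theory.
Local Open Scope ring_scope.
Local Notation pQtoC := (map_poly (@ratr algC)).

Lemma key_eq (m : nat) (z : algC) (c : nat -> nat) (g : int) :
  prime m -> m.-primitive_root z ->
  \sum_(r < m) (c r)%:R * z ^+ r = g%:~R ->
  forall r, (0 < r < m)%N -> c r = c 1%N.
Proof.
move=> pm pz Hs r /andP[r0 rm].
have m1 : (1 < m)%N by apply: prime_gt1.
have m0 : (0 < m)%N by apply: prime_gt0.
pose p : {poly rat} := \poly_(i < m) ((c i)%:R - (i == 0%N)%:R * g%:~R).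
pose u : {poly rat} := \poly_(i < m) 1.
have [q [Dq mq] dvq] := minCpolyP z.
have szq : size q = m.
  have := size_cyclotomic z m; rewrite -(minCpoly_cyclotomic pz) Dq size_map_poly.
  by rewrite totient_prime // prednK.
have q0 : q != 0 by apply: monic_neq0.
have evalp (E : nat -> rat) : (pQtoC (\poly_(i < m) E i)).[z] = \sum_(i < m) ratr (E i) * z ^+ i.
  rewrite (@horner_coef_wide _ m); last by rewrite size_map_poly size_poly.
  by apply: eq_bigr => i _; rewrite coef_map coef_poly ltn_ord.
have dp : q %| p.
  rewrite -dvq /root evalp.
  rewrite (eq_bigr (fun i : 'I_m => (c i)%:R * z ^+ i - (i == 0%N :> nat)%:R * g%:~R * z ^+ i)); last first.
    by move=> i _; rewrite rmorphB rmorphM /= !rmorph_nat rmorph_int mulrBl.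
  rewrite sumrB Hs (bigD1 (Ordinal m0)) //= big1 ?addr0 ?expr0 ?mulr1 ?mul1r ?subrr //.
  by move=> i /negbTE; rewrite -val_eqE /= => ->; rewrite !mul0r.
have du : q %| u.
  rewrite -dvq /root evalp.
  rewrite (eq_bigr (fun i : 'I_m => z ^+ i)); last by move=> i _; rewrite rmorph1 mul1r.
  have : z ^+ m - 1 = 0 by rewrite (prim_expr_order pz) subrr.
  rewrite subrX1 => /eqP; rewrite mulf_eq0 => /orP[|/eqP //].
  rewrite subr_eq0 => /eqP z1; move: (prim_order_dvd pz 1); rewrite z1 expr1 eqxx.
  by rewrite dvdn1 => /eqP e1; rewrite e1 in m1.
have szd (s : {poly rat}) : q %| s -> (size s <= m)%N -> s = ((s %/ q)`_0)%:P * q.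
  move=> ds ss; rewrite -{1}(divpK ds); congr (_ * _); apply: size1_polyC.
  by rewrite size_divp // szq leq_subLR addn1 prednK.
have Hp := szd p dp (size_poly _ _).
have Hu := szd u du (size_poly _ _).
set kp := (p %/ q)`_0 in Hp; set ku := (u %/ q)`_0 in Hu.
have cu i : (i < m)%N -> ku * q`_i = 1.
  by move=> im; rewrite -coefCM -Hu coef_poly im.
have cp i : (i < m)%N -> p`_i * ku = kp.
  by move=> im; rewrite Hp coefCM -mulrA [q`_i * _]mulrC cu // mulr1.
have ku0 : ku != 0 by apply/eqP => k0; have := cu 0%N m0; rewrite k0 mul0r => /eqP; rewrite eq_sym oner_eq0.
have := cp r rm; rewrite -(cp 1%N m1) => /(mulIf ku0).
rewrite !coef_poly rm m1 /= (negbTE (lt0n_neq0 r0)) mul0r !subr0 => /eqP.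
by rewrite eqr_nat => /eqP.
Qed.

Lemma sum_mod (m : nat) (z : algC) (I : finType) (P : pred I) (e : I -> nat) (g : int) :
  prime m -> odd m -> m.-primitive_root z -> \sum_(i | P i) z ^+ e i = g%:~R ->
  (\sum_(i | P i) e i = 0 %[mod m])%N.
Proof.
move=> pm om pz H.
have m0 := prime_gt0 pm.
have m1 := prime_gt1 pm.
pose pr (i : I) : 'I_m := Ordinal (ltn_pmod (e i) m0).
pose c (r : nat) := #|[pred i | P i && (e i %% m == r)%N]|.
have E1 : \sum_(i | P i) z ^+ e i = \sum_(r < m) (c r)%:R * z ^+ r.
  rewrite (partition_big pr xpredT) //=; apply: eq_bigr => r _.
  rewrite (eq_bigr (fun _ => z ^+ r)); last first.
    by move=> i /andP[_ /eqP <-]; rewrite /= prim_expr_mod.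
  by rewrite sumr_const mulr_natl; congr (_ *+ _).
have E2 : (\sum_(i | P i) e i = \sum_(r < m) c r * r %[mod m])%N.
  rewrite -modn_summ (partition_big pr xpredT) //=; congr (_ %% m)%N.
  apply: eq_bigr => r _.
  rewrite (eq_bigr (fun _ => nat_of_ord r)); last first.
    by move=> i /andP[_ /eqP <-].
  by rewrite sum_nat_const; congr (_ * _)%N.
rewrite E2 (eq_bigr (fun r : 'I_m => c 1%N * r)%N); last first.
  move=> r _; case: (posnP r) => [-> | r0]; first by rewrite !muln0.
  by rewrite (key_eq _ _ _ _ pm pz (etrans (esym E1) H)) // r0 ltn_ord.
rewrite -big_distrr /= -(big_mkord xpredT (fun i => i)) bin2_sum bin2odd //.
by rewrite mulnCA modnMr mod0n.
Qed.
Lemma modcancel N u v p q : (u + v = p + q %[mod N])%N -> (u = p %[mod N])%N -> (v = q %[mod N])%N.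
Proof.
move=> h1 h2; apply/eqP; rewrite -(eqn_modDl p); apply/eqP.
by rewrite -modnDml -h2 modnDml h1.
Qed.

Lemma modcalc m X Y L R : (0 < m)%N -> (X + m.-1 * Y = 0 %[mod m])%N -> (X + L = Y + R)%N -> (L = R %[mod m])%N.
Proof.
move=> m0 h e.
have e1 : (X + m.-1 * Y + (Y + L) = Y * m + (Y + R))%N.
  case: m m0 h => [//|k] _ _ /=; move: e; nia.
have : ((Y + L) = (Y + R) %[mod m])%N.
  by rewrite -(modnMDl Y (Y + R)) -e1 -(modnDml (X + m.-1 * Y)) h mod0n add0n.
by move/eqP; rewrite eqn_modDl => /eqP.
Qed.

Lemma shift_sum N (f : nat -> nat) : (forall x, f (x + N) = f x)%N ->
  forall t, (\sum_(i < N) f (i + t) = \sum_(i < N) f i)%N.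
Proof.
move=> Hf t; elim: t f Hf => [|t IH] f Hf.
  by apply: eq_bigr => i _; rewrite addn0.
have IH' := IH (fun x => f x.+1); rewrite /= in IH'.
rewrite (eq_bigr (fun i : 'I_N => f (i + t).+1)); last by move=> i _; rewrite addnS.
rewrite IH'; last by move=> x; rewrite -addSn Hf.
clear IH IH'; case: N Hf => [|k] Hf; first by rewrite !big_ord0.
rewrite big_ord_recr big_ord_recl /= addnC; congr (_ + _)%N.
by have := Hf 0%N; rewrite add0n.
Qed.

Lemma sum_hit N (f : nat -> nat) k : (k < N)%N ->
  (\sum_(i < N) (if (i == k :> nat) then f i else 0) = f k)%N.
Proof.
move=> kN; rewrite -big_mkcond /= (big_pred1 (Ordinal kN)) //.
Qed.

Lemma sum_two N (f : nat -> nat) k0 k1 : (k0 < N)%N -> (k1 < N)%N -> k0 != k1 ->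
  (\sum_(i < N) (if (i == k0 :> nat) || (i == k1 :> nat) then f i else 0) = f k0 + f k1)%N.
Proof.
move=> h0 h1 ne; rewrite -(sum_hit N f k0 h0) -(sum_hit N f k1 h1) -big_split /=.
apply: eq_bigr => i _; case: (eqVneq (i : nat) k0) => [e|]; last by case: ifP.
by rewrite e (negbTE ne) addn0.
Qed.

Lemma sum_splitP N (Q : 'I_N -> bool) (F : 'I_N -> nat) :
  (\sum_(i < N) F i = \sum_(i < N) (if ~~ Q i then F i else 0) + \sum_(i < N) (if Q i then F i else 0))%N.
Proof. by rewrite -big_split /=; apply: eq_bigr => i _; case: (Q i); rewrite ?addn0. Qed.

Lemma modshift N i t k : (i < N)%N -> (t <= N)%N ->
  ((i + t) %% N == k %% N)%N = (i == (k + (N - t)) %% N)%N.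
Proof.
move=> iN tN; rewrite -(eqn_modDr (N - t)) -addnA subnKC // modnDr modn_small //.
Qed.

Lemma per_mod N (a : nat -> algC) : (forall i, a (i + N)%N = a i) -> forall x, a x = a (x %% N)%N.
Proof.
move=> Hp x; rewrite {1}(divn_eq x N); elim: (x %/ N)%N => [|k IH]; first by rewrite mul0n add0n.
by rewrite mulSn -addnA addnC Hp.
Qed.

Lemma jj1 N j : (1 < N)%N -> (j %% N != j.+1 %% N)%N.
Proof.
move=> N1; apply/negP => /eqP h.
have := eqn_mod_dvd N (leqnSn j); rewrite subSnn h eqxx dvdn1 => /esym/eqP e.
by rewrite e in N1.
Qed.

Definition Bexp (m : nat) (zeta w : algC) : nat :=
  if [pick b : 'I_m | w == zeta ^+ b] is Some b then val b else 0%N.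

Theorem corollary1 (m : nat) (zeta : algC) (g1 g2 : int) (n : nat)
  (a : nat -> algC) (j : nat) :
  prime m -> odd m -> m.-primitive_root zeta -> (0 < n)%N ->
  periodic (n.+2) a ->
  almost_mary m zeta (n.+2) 2 a ->
  nearly_perfect (n.+2) a g1 g2 ->
  a j = 0 -> a j.+1 = 0 ->
  forall x y : nat, x + y = (2 * j).+1 %[mod n.+2] -> a x = a y.
Proof.
move=> pm om pz n0 Hper [Hcard Hex] Hnps Hj Hj1 x y Hxy.
set N := n.+2 in Hper Hex Hcard Hnps Hxy *.
have N0 : (0 < N)%N by [].
have N1 : (1 < N)%N by [].
have m0 := prime_gt0 pm.
have aP := per_mod N a Hper.
have aE u v : (u = v %[mod N])%N -> a u = a v by move=> h; rewrite aP h -aP.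
have Z u : (a u == 0) = ((u %% N == j %% N) || (u %% N == j.+1 %% N))%N.
  pose i0 : 'I_N := Ordinal (ltn_pmod j N0).
  pose i1 : 'I_N := Ordinal (ltn_pmod j.+1 N0).
  have ne : i0 != i1 by rewrite -val_eqE /= jj1.
  have SA : [set i : 'I_N | a i == 0] = [set i0; i1].
    apply/eqP; rewrite eq_sym eqEcard cards2 ne Hcard leqnn andbT.
    by apply/subsetP => i; rewrite !inE => /orP[] /eqP -> /=; rewrite -aP ?Hj ?Hj1.
  have : (Ordinal (ltn_pmod u N0) \in [set i : 'I_N | a i == 0]) = (Ordinal (ltn_pmod u N0) \in [set i0; i1]) by rewrite SA.
  by rewrite !inE /= -!val_eqE /= -aP.
have Zs u v : (u + v = j + j.+1 %[mod N])%N -> (a u == 0) = (a v == 0).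
  move=> h; rewrite !Z.
  have h1 : (u %% N == j %% N)%N = (v %% N == j.+1 %% N)%N.
    apply/eqP/eqP => [hu|hv]; first exact: modcancel h hu.
    by apply: (modcancel N v u j.+1 j) => //; rewrite addnC h addnC.
  have h2 : (u %% N == j.+1 %% N)%N = (v %% N == j %% N)%N.
    apply/eqP/eqP => [hu|hv].
      by apply: (modcancel N u v j.+1 j) => //; rewrite h addnC.
    by apply: (modcancel N v u j j.+1) => //; rewrite addnC h.
  by rewrite h1 h2 orbC.
have zeta0 : zeta != 0.
  apply/eqP => e; have := prim_expr_order pz; rewrite e expr0n.
  by rewrite (negbTE (lt0n_neq0 m0)) => /eqP; rewrite eq_sym oner_eq0.
pose B u := Bexp m zeta (a u).
have BE u : a u != 0 -> a u = zeta ^+ B u.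
  move=> nz; rewrite /B /Bexp; case: pickP => [b /eqP //| none].
  exfalso; have := Hex (Ordinal (ltn_pmod u N0)); rewrite /= -aP => /(_ nz) [b hb].
  by have := none (Ordinal (ltn_pmod b m0)); rewrite /= prim_expr_mod // hb eqxx.
have B0 u : a u = 0 -> B u = 0%N.
  move=> z0; rewrite /B /Bexp z0; case: pickP => // b /eqP h; exfalso; move: h.
  by apply/eqP; rewrite eq_sym expf_neq0.
have Bper u : B u = B (u %% N)%N by rewrite /B -aP.
have BpN u : B (u + N)%N = B u by rewrite /B Hper.
have cj b : (zeta ^+ b)^* = zeta ^+ (m.-1 * b).
  have w0 : zeta ^+ b != 0 by rewrite expf_neq0.
  have hw : (zeta ^+ b) ^+ m = 1 by rewrite exprAC (prim_expr_order pz) expr1n.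
  have hn : `|zeta ^+ b| == 1.
    by rewrite -(pexpr_eq1 m0 (normr_ge0 _)) -normrX hw normr1.
  apply: (mulfI w0); rewrite -normCK (eqP hn) expr1n -exprD.
  by rewrite -mulSn prednK // exprM (prim_expr_order pz) expr1n.
have Bm u v : B (u %% N + v)%N = B (u + v)%N by rewrite Bper modnDml -Bper.
have cond t : (1 <= t <= N.-1)%N ->
    (B (j + (N - t)) + B (j.+1 + (N - t)) = B (j + t) + B (j.+1 + t) %[mod m])%N.
  move=> ht; have tN : (t <= N)%N by case/andP: ht => _ h; apply: leq_trans h (leq_pred N).
  pose P (i : 'I_N) := (a i != 0) && (a (i + t)%N != 0).
  have HC : autocorr N a t = \sum_(i < N | P i) zeta ^+ (B i + m.-1 * B (i + t)%N).
    rewrite /autocorr [in RHS]big_mkcond; apply: eq_bigr => i _; rewrite /P.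
    case: (eqVneq (a i) 0) => [->|ai]; first by rewrite mul0r.
    case: (eqVneq (a (i + t)%N) 0) => [->|ait]; first by rewrite conjC0 mulr0.
    by rewrite /= {1}(BE _ ai) {1}(BE _ ait) cj exprD.
  have Hs : (\sum_(i < N | P i) (B i + m.-1 * B (i + t)) = 0 %[mod m])%N.
    case: (Hnps t ht) => h;
    by apply: (sum_mod m zeta 'I_N P (fun i : 'I_N => B i + m.-1 * B (i + t))%N _ pm om pz); rewrite -HC; exact h.
  rewrite big_split /= -big_distrr /= in Hs.
  apply: (modcalc m _ _ _ _ m0 Hs).
  have SX : (\sum_(i < N) B i = \sum_(i < N | P i) B i + (B (j + (N - t)) + B (j.+1 + (N - t))))%N.
    rewrite (sum_splitP N (fun i : 'I_N => a (i + t)%N == 0) (fun i : 'I_N => B i)).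
    congr (_ + _)%N.
      rewrite [in RHS]big_mkcond; apply: eq_bigr => i _; rewrite /P.
      case: (eqVneq (a i) 0) => [ai|ai] /=; last by [].
      by rewrite (B0 _ ai); case: ifP.
    rewrite (eq_bigr (fun i : 'I_N => if (i == (j + (N - t)) %% N :> nat)%N || (i == (j.+1 + (N - t)) %% N :> nat)%N then B i else 0%N)).
      rewrite sum_two ?ltn_pmod //; last by rewrite addSn jj1.
      by rewrite -!Bper.
    by move=> i _; rewrite Z !modshift.
  have SY : (\sum_(i < N) B i = \sum_(i < N | P i) B (i + t) + (B (j + t) + B (j.+1 + t)))%N.
    rewrite -(shift_sum N B BpN t) (sum_splitP N (fun i : 'I_N => a i == 0) (fun i : 'I_N => B (i + t)%N)).
    congr (_ + _)%N.
      rewrite [in RHS]big_mkcond; apply: eq_bigr => i _; rewrite /P.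
      case: (eqVneq (a (i + t)%N) 0) => [ai|ai] /=; last by rewrite andbT.
      by rewrite (B0 _ ai) andbF; case: ifP.
    rewrite (eq_bigr (fun i : 'I_N => if (i == j %% N :> nat)%N || (i == j.+1 %% N :> nat)%N then B (i + t)%N else 0%N)).
      by rewrite (sum_two N (fun u => B (u + t)%N)) ?ltn_pmod ?jj1 // !Bm.
    by move=> i _; rewrite Z (modn_small (ltn_ord i)).
  by rewrite -SX -SY.
have ind s : (s < N)%N -> (B (j.+1 + s) = B (j + (N - s)) %[mod m])%N.
  elim: s => [_|s IH sN].
    by rewrite addn0 subn0 BpN (B0 _ Hj) (B0 _ Hj1).
  have ht : (1 <= s.+1 <= N.-1)%N by apply/andP; split => //; rewrite -ltnS prednK.
  have := cond s.+1 ht.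
  rewrite (_ : j.+1 + (N - s.+1) = j + (N - s))%N; last by move: sN; clear; lia.
  rewrite (_ : j + s.+1 = j.+1 + s)%N; last by rewrite addnS.
  move=> h; apply/esym.
  apply: (modcancel m (B (j + (N - s))%N) _ (B (j.+1 + s)%N)); last by rewrite (IH (ltnW sN)).
  by rewrite addnC h.
pose s := ((x + N.-1 * j.+1) %% N)%N.
have sN : (s < N)%N by apply: ltn_pmod.
have hx : (x = j.+1 + s %[mod N])%N.
  rewrite /s modnDmr (_ : j.+1 + (x + N.-1 * j.+1) = j.+1 * N + x)%N ?modnMDl //.
  by rewrite /N /=; nia.
have hy : (y = j + (N - s) %[mod N])%N.
  apply: (modcancel N (j.+1 + s) y (j.+1 + s) (j + (N - s))) => //.
  rewrite -(modnDml (j.+1 + s) y) -hx modnDml Hxy.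
  rewrite (_ : j.+1 + s + (j + (N - s)) = (2 * j).+1 + N)%N ?modnDr //.
  by move: sN; clear; lia.
rewrite (aE _ _ hx) (aE _ _ hy).
have hz := Zs (j.+1 + s)%N (j + (N - s))%N.
rewrite (_ : j.+1 + s + (j + (N - s)) = (j + j.+1) + N)%N ?modnDr in hz; last by move: sN; clear; lia.
have {}hz := hz erefl.
case: (eqVneq (a (j.+1 + s)%N) 0) => [e|e].
  by rewrite e; apply/esym/eqP; rewrite -hz e eqxx.
have e' : a (j + (N - s))%N != 0 by rewrite -hz.
by rewrite (BE _ e) (BE _ e') -(prim_expr_mod pz) (ind s sN) prim_expr_mod.
Qed.
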